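(* The predicate modal logic $\mathsf{QGrz}+\Box\exists x P(x)\to\Diamond\exists x\Box P(x)$ is not a modal companion of $\mathsf{IQC}$; i.e., there is a formula $\varphi$ of intuitionistic predicate logic with $\mathsf{IQC}\nvdash\varphi$ but $\mathsf{QGrz}+\Box\exists x P(x)\to\Diamond\exists x\Box P(x)\vdash\varphi^t$.
   Context: $\mathsf{IQC}$ is intuitionistic predicate calculus. $\mathsf{QS4}$ is the predicate extension of the modal logic $\mathsf{S4}$, and $\mathsf{QGrz}$ is $\mathsf{QS4}$ plus the Grzegorczyk axiom $\Box(\Box(p\to\Box p)\to p)\to p$ (with $p$ ranging over formulas). $\Diamond=\neg\Box\neg$. The Gödel translation $(-)^t$ of intuitionistic predicate formulas into modal predicate formulas is given by $\bot^t=\bot$, $P(\bar x)^t=\Box P(\bar x)$, $(\varphi\wedge\psi)^t=\varphi^t\wedge\psi^t$, $(\varphi\vee\psi)^t=\varphi^t\vee\psi^t$, $(\varphi\to\psi)^t=\Box(\neg\varphi^t\vee\psi^t)$, $(\forall x\varphi)^t=\Box\forall x\varphi^t$, $(\exists x\varphi)^t=\exists x\varphi^t$. A modal predicate logic $\mathsf{M}$ is a modal companion of $\mathsf{IQC}$ if for every formula $\varphi$, $\mathsf{IQC}\vdash\varphi$ iff $\mathsf{M}\vdash\varphi^t$. *)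

(* Defs.v *)
(* Individual variables are de Bruijn indices (nat); there are no function
   symbols, constants or equality. *)
From Stdlib Require Import List.
Import ListNotations.

Inductive iform : Type :=
| IBot : iform
| IPred : nat -> list nat -> iform
| IAnd : iform -> iform -> iform
| IOr : iform -> iform -> iform
| IImp : iform -> iform -> iform
| IAll : iform -> iform     (* binds de Bruijn index 0 *)
| IEx : iform -> iform.

Inductive mform : Type :=
| MBot : mform
| MPred : nat -> list nat -> mform
| MAnd : mform -> mform -> mform
| MOr : mform -> mform -> mform
| MImp : mform -> mform -> mform
| MBox : mform -> mform
| MAll : mform -> mform
| MEx : mform -> mform.

Definition MNeg (A : mform) : mform := MImp A MBot.
Definition MDia (A : mform) : mform := MNeg (MBox (MNeg A)).
Definition INeg (A : iform) : iform := IImp A IBot.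

Definition up (s : nat -> nat) : nat -> nat :=
  fun n => match n with 0 => 0 | S k => S (s k) end.

Fixpoint iren (s : nat -> nat) (A : iform) : iform :=
  match A with
  | IBot => IBot
  | IPred p xs => IPred p (map s xs)
  | IAnd B C => IAnd (iren s B) (iren s C)
  | IOr B C => IOr (iren s B) (iren s C)
  | IImp B C => IImp (iren s B) (iren s C)
  | IAll B => IAll (iren (up s) B)
  | IEx B => IEx (iren (up s) B)
  end.

Fixpoint mren (s : nat -> nat) (A : mform) : mform :=
  match A with
  | MBot => MBot
  | MPred p xs => MPred p (map s xs)
  | MAnd B C => MAnd (mren s B) (mren s C)
  | MOr B C => MOr (mren s B) (mren s C)
  | MImp B C => MImp (mren s B) (mren s C)
  | MBox B => MBox (mren s B)
  | MAll B => MAll (mren (up s) B)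
  | MEx B => MEx (mren (up s) B)
  end.

(* instantiate the variable 0 by the variable t (other free variables shift down) *)
Definition inst (t : nat) : nat -> nat :=
  fun n => match n with 0 => t | S k => k end.

Definition ishift (A : iform) : iform := iren S A.
Definition mshift (A : mform) : mform := mren S A.

Inductive IQC_prov : iform -> Prop :=
| i_K A B : IQC_prov (IImp A (IImp B A))
| i_S A B C : IQC_prov (IImp (IImp A (IImp B C)) (IImp (IImp A B) (IImp A C)))
| i_andE1 A B : IQC_prov (IImp (IAnd A B) A)
| i_andE2 A B : IQC_prov (IImp (IAnd A B) B)
| i_andI A B : IQC_prov (IImp A (IImp B (IAnd A B)))
| i_orI1 A B : IQC_prov (IImp A (IOr A B))
| i_orI2 A B : IQC_prov (IImp B (IOr A B))
| i_orE A B C : IQC_prov (IImp (IImp A C) (IImp (IImp B C) (IImp (IOr A B) C)))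
| i_efq A : IQC_prov (IImp IBot A)
| i_allE A t : IQC_prov (IImp (IAll A) (iren (inst t) A))
| i_exI A t : IQC_prov (IImp (iren (inst t) A) (IEx A))
| i_mp A B : IQC_prov (IImp A B) -> IQC_prov A -> IQC_prov B
| i_allR A B : IQC_prov (IImp (ishift B) A) -> IQC_prov (IImp B (IAll A))
| i_exR A B : IQC_prov (IImp A (ishift B)) -> IQC_prov (IImp (IEx A) B).

(* ---------- QS4 (classical predicate logic + S4, no Barcan formula) ---------- *)
Inductive QS4_axiom : mform -> Prop :=
| m_K A B : QS4_axiom (MImp A (MImp B A))
| m_S A B C : QS4_axiom (MImp (MImp A (MImp B C)) (MImp (MImp A B) (MImp A C)))
| m_andE1 A B : QS4_axiom (MImp (MAnd A B) A)
| m_andE2 A B : QS4_axiom (MImp (MAnd A B) B)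
| m_andI A B : QS4_axiom (MImp A (MImp B (MAnd A B)))
| m_orI1 A B : QS4_axiom (MImp A (MOr A B))
| m_orI2 A B : QS4_axiom (MImp B (MOr A B))
| m_orE A B C : QS4_axiom (MImp (MImp A C) (MImp (MImp B C) (MImp (MOr A B) C)))
| m_efq A : QS4_axiom (MImp MBot A)
| m_dne A : QS4_axiom (MImp (MNeg (MNeg A)) A)
| m_allE A t : QS4_axiom (MImp (MAll A) (mren (inst t) A))
| m_exI A t : QS4_axiom (MImp (mren (inst t) A) (MEx A))
| m_boxK A B : QS4_axiom (MImp (MBox (MImp A B)) (MImp (MBox A) (MBox B)))
| m_boxT A : QS4_axiom (MImp (MBox A) A)
| m_box4 A : QS4_axiom (MImp (MBox A) (MBox (MBox A))).

Definition Grz (A : mform) : mform :=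
  MImp (MBox (MImp (MBox (MImp A (MBox A))) A)) A.

(* the extra axiom  Box Ex x P(x) -> Dia Ex x Box P(x), as a schema
   (all substitution instances: P(x) replaced by any formula A, where x is
   de Bruijn index 0 and A may contain further free variables) *)
Definition extra_axiom (A : mform) : mform :=
  MImp (MBox (MEx A)) (MDia (MEx (MBox A))).

Inductive QGrzE_prov : mform -> Prop :=
| q_ax A : QS4_axiom A -> QGrzE_prov A
| q_grz A : QGrzE_prov (Grz A)
| q_extra A : QGrzE_prov (extra_axiom A)
| q_mp A B : QGrzE_prov (MImp A B) -> QGrzE_prov A -> QGrzE_prov B
| q_nec A : QGrzE_prov A -> QGrzE_prov (MBox A)
| q_allR A B : QGrzE_prov (MImp (mshift B) A) -> QGrzE_prov (MImp B (MAll A))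
| q_exR A B : QGrzE_prov (MImp A (mshift B)) -> QGrzE_prov (MImp (MEx A) B).

Fixpoint goedel (A : iform) : mform :=
  match A with
  | IBot => MBot
  | IPred p xs => MBox (MPred p xs)
  | IAnd B C => MAnd (goedel B) (goedel C)
  | IOr B C => MOr (goedel B) (goedel C)
  | IImp B C => MBox (MOr (MNeg (goedel B)) (goedel C))
  | IAll B => MBox (MAll (goedel B))
  | IEx B => MEx (goedel B)
  end.

(* Main.v *)
Require Import Defs.
From Stdlib Require Import List Lia.
Import ListNotations.

Definition scons (d : nat) (r : nat -> nat) : nat -> nat :=
  fun n => match n with 0 => d | S k => r k end.

Fixpoint frc (w : nat) (r : nat -> nat) (A : iform) : Prop :=
  match A with
  | IBot => False
  | IPred _ xs => forall d, In d (map r xs) -> d < w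
  | IAnd B C => frc w r B /\ frc w r C
  | IOr B C => frc w r B \/ frc w r C
  | IImp B C => forall w', w <= w' -> frc w' r B -> frc w' r C
  | IAll B => forall w', w <= w' -> forall d, frc w' (scons d r) B
  | IEx B => exists d, frc w (scons d r) B
  end.

Lemma frc_mono A : forall r w w', w <= w' -> frc w r A -> frc w' r A.
Proof.
  induction A; cbn; intros r w w' Hw H.
  - exact H.
  - intros d Hd; specialize (H d Hd); lia.
  - destruct H; split; eauto.
  - destruct H; [left|right]; eauto.
  - intros w2 H2; apply H; lia.
  - intros w2 H2; apply H; lia.
  - destruct H as [d Hd]; exists d; eauto.
Qed.

Lemma frc_ren A : forall s r r' w, (forall n, r' n = r (s n)) ->
  (frc w r (iren s A) <-> frc w r' A).
Proof.
  induction A; cbn; intros s r r' w Hs.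
  - tauto.
  - rewrite map_map. assert (map (fun x => r (s x)) l = map r' l) as ->.
    { apply map_ext; intro; now rewrite Hs. } tauto.
  - rewrite (IHA1 s r r' w Hs), (IHA2 s r r' w Hs); tauto.
  - rewrite (IHA1 s r r' w Hs), (IHA2 s r r' w Hs); tauto.
  - split; intros H w' Hw; specialize (H w' Hw);
    rewrite (IHA1 s r r' w' Hs), (IHA2 s r r' w' Hs) in *; tauto.
  - split; intros H w' Hw d; specialize (H w' Hw d);
    assert (Hu : forall n, scons d r' n = scons d r (up s n))
      by (intros [|n]; cbn; auto);
    [rewrite <- (IHA (up s) (scons d r) (scons d r') w' Hu)
    |rewrite (IHA (up s) (scons d r) (scons d r') w' Hu)]; exact H.
  - split; intros [d H]; exists d;
    assert (Hu : forall n, scons d r' n = scons d r (up s n))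
      by (intros [|n]; cbn; auto);
    [rewrite <- (IHA (up s) (scons d r) (scons d r') w Hu)
    |rewrite (IHA (up s) (scons d r) (scons d r') w Hu)]; exact H.
Qed.

Lemma sound A : IQC_prov A -> forall w r, frc w r A.
Proof.
  induction 1; cbn; intros w r.
  - intros w1 H1 HA w2 H2 _. eapply frc_mono; [|exact HA]; lia.
  - intros w1 H1 Habc w2 H2 Hab w3 H3 Ha.
    eapply (Habc w3); [lia| exact Ha | lia | ].
    apply (Hab w3); [lia|exact Ha].
  - intros w1 _ [H _]; exact H.
  - intros w1 _ [_ H]; exact H.
  - intros w1 _ Ha w2 H2 Hb; split; [eapply frc_mono; [|exact Ha]; lia|exact Hb].
  - intros w1 _ H; left; exact H.
  - intros w1 _ H; right; exact H.
  - intros w1 H1 Hac w2 H2 Hbc w3 H3 [Ha|Hb].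
    + apply (Hac w3); [lia|exact Ha].
    + apply (Hbc w3); [lia|exact Hb].
  - intros w1 _ [].
  - intros w1 _ H. specialize (H w1 (le_n _) (r t)).
    rewrite (frc_ren A (inst t) r (scons (r t) r)); [exact H|].
    intros [|n]; reflexivity.
  - intros w1 _ H. exists (r t).
    rewrite (frc_ren A (inst t) r (scons (r t) r)) in H; [exact H|].
    intros [|n]; reflexivity.
  - apply (IHIQC_prov1 w r w (le_n _)). apply IHIQC_prov2.
  - intros w1 H1 HB w2 H2 d.
    apply (IHIQC_prov w2 (scons d r) w2 (le_n _)).
    unfold ishift. rewrite (frc_ren B S (scons d r) r); [|reflexivity].
    eapply frc_mono; [|exact HB]; exact H2.
  - intros w1 H1 [d Hd].
    specialize (IHIQC_prov w1 (scons d r) w1 (le_n _) Hd).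
    unfold ishift in IHIQC_prov.
    rewrite (frc_ren B S (scons d r) r) in IHIQC_prov; [exact IHIQC_prov|reflexivity].
Qed.

Definition phi : iform :=
  INeg (INeg (IEx (IImp (IPred 0 [0]) (IAll (IPred 0 [0]))))).

Lemma phi_unprov : ~ IQC_prov phi.
Proof.
  intro H. pose proof (sound _ H 0 (fun _ => 0)) as Hs. cbn in Hs.
  apply (Hs 0 (le_n _)).
  intros w' _ [d Hd].
  pose (w2 := Nat.max w' (S d)).
  assert (Hq : forall d0, In d0 [d] -> d0 < w2).
  { intros d0 [<-|[]]; unfold w2; lia. }
  specialize (Hd w2 ltac:(unfold w2; lia) Hq w2 (le_n _) w2).
  specialize (Hd w2 (or_introl eq_refl)). lia.
Qed.

Notation P := QGrzE_prov.

Inductive D (G : list mform) : mform -> Prop :=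
| d_thm A : P A -> D G A
| d_hyp A : In A G -> D G A
| d_mp A B : D G (MImp A B) -> D G A -> D G B.

Lemma imp_refl A : P (MImp A A).
Proof.
  eapply q_mp; [eapply q_mp; [apply q_ax, (m_S A (MImp A A) A)|apply q_ax, m_K]|].
  apply q_ax, (m_K A A).
Qed.

Lemma ded_gen G' A : D G' A -> forall B G, G' = B :: G -> D G (MImp B A).
Proof.
  induction 1; intros B0 G0 ->.
  - apply d_thm. eapply q_mp; [apply q_ax, m_K|exact H].
  - destruct H as [<-|H].
    + apply d_thm, imp_refl.
    + eapply d_mp; [apply d_thm, q_ax, m_K|apply d_hyp, H].
  - eapply d_mp; [eapply d_mp; [apply d_thm, q_ax, m_S|]|].
    + apply IHD1; reflexivity.
    + apply IHD2; reflexivity.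
Qed.

Lemma ded G B A : D (B :: G) A -> D G (MImp B A).
Proof. intro H; eapply ded_gen; eauto. Qed.

Lemma D_nil A : D [] A -> P A.
Proof. induction 1; [assumption|destruct H|eapply q_mp; eauto]. Qed.

Lemma Dax G A B : P (MImp A B) -> D G A -> D G B.
Proof. intros H1 H2; eapply d_mp; [apply d_thm, H1|exact H2]. Qed.

Lemma Ddne G A : D (MNeg A :: G) MBot -> D G A.
Proof. intro H. apply ded in H. eapply Dax; [apply q_ax, m_dne|exact H]. Qed.

Lemma boxmono X Y : P (MImp X Y) -> P (MImp (MBox X) (MBox Y)).
Proof. intro H; eapply q_mp; [apply q_ax, m_boxK|apply q_nec, H]. Qed.

Definition Q := MPred 0 [0].
Definition BQ := MBox Q.
Definition C := MAll BQ.
Definition A0 := MOr (MNeg BQ) C.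
Definition F := MBox (MOr (MNeg BQ) (MBox C)).
Definition E := MEx F.

Lemma exA : P (MEx A0).
Proof.
  apply D_nil. apply Ddne.
  assert (HA : P (MImp A0 (MEx A0))) by exact (q_ax _ (m_exI A0 0)).
  assert (HC : P (MImp (MNeg (MEx A0)) C)).
  { apply q_allR. change (P (MImp (MNeg (MEx A0)) BQ)).
    apply D_nil, ded, Ddne.
    eapply d_mp; [apply d_hyp; right; left; reflexivity|].
    eapply Dax; [exact HA|]. eapply Dax; [apply q_ax, m_orI1|].
    apply d_hyp; left; reflexivity. }
  eapply d_mp; [apply d_hyp; left; reflexivity|].
  eapply Dax; [exact HA|]. eapply Dax; [apply q_ax, m_orI2|].
  eapply Dax; [exact HC|]. apply d_hyp; left; reflexivity.
Qed.

Lemma boxA_F : P (MImp (MBox A0) F).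
Proof.
  assert (H1 : P (MImp (MBox A0) (MOr (MNeg BQ) (MBox C)))).
  { apply D_nil, ded, Ddne.
    assert (HBQ : D [MNeg (MOr (MNeg BQ) (MBox C)); MBox A0] BQ).
    { apply Ddne. eapply d_mp; [apply d_hyp; right; left; reflexivity|].
      eapply Dax; [apply q_ax, m_orI1|]. apply d_hyp; left; reflexivity. }
    assert (HAimp : P (MImp A0 (MImp BQ C))).
    { eapply q_mp; [eapply q_mp; [apply q_ax, m_orE|]|].
      - apply D_nil, ded, ded. eapply Dax; [apply q_ax, m_efq|].
        eapply d_mp; apply d_hyp; [right; left|left]; reflexivity.
      - apply q_ax, m_K. }
    eapply d_mp; [apply d_hyp; left; reflexivity|].
    eapply Dax; [apply q_ax, m_orI2|].
    eapply d_mp; [eapply Dax; [apply q_ax, m_boxK|]|].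
    - eapply d_mp; [eapply Dax; [apply q_ax, m_boxK|]|].
      + apply d_thm, q_nec, HAimp.
      + apply d_hyp; right; left; reflexivity.
    - eapply Dax; [apply q_ax, m_box4|]. exact HBQ. }
  apply D_nil, ded.
  eapply Dax; [apply boxmono, H1|].
  eapply Dax; [apply q_ax, m_box4|]. apply d_hyp; left; reflexivity.
Qed.

Lemma exboxA_E : P (MImp (MEx (MBox A0)) E).
Proof.
  apply q_exR. change (P (MImp (MBox A0) E)).
  apply D_nil, ded. eapply Dax; [exact (q_ax _ (m_exI F 0))|].
  eapply Dax; [exact boxA_F|]. apply d_hyp; left; reflexivity.
Qed.

Lemma goal : P (goedel phi).
Proof.
  change (P (MBox (MOr (MNeg (MBox (MOr (MNeg E) MBot))) MBot))).
  apply q_nec. eapply q_mp; [apply q_ax, m_orI1|].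
  apply D_nil, ded.
  assert (Hx : P (MImp (MOr (MNeg E) MBot) (MNeg (MEx (MBox A0))))).
  { apply D_nil, ded, ded.
    eapply d_mp; [|eapply Dax; [exact exboxA_E|]; apply d_hyp; left; reflexivity].
    eapply d_mp; [|apply d_hyp; right; left; reflexivity].
    eapply d_mp; [eapply Dax; [apply q_ax, m_orE|]|].
    - apply d_thm, imp_refl.
    - apply d_thm, q_ax, m_efq. }
  eapply d_mp.
  - eapply Dax; [exact (q_extra A0)|]. apply d_thm, q_nec, exA.
  - eapply Dax; [apply boxmono, Hx|]. apply d_hyp; left; reflexivity.
Qed.

Theorem theorem5p12 :
  exists phi : iform, ~ IQC_prov phi /\ QGrzE_prov (goedel phi).
Proof.
  exists phi. split; [exact phi_unprov|exact goal].
Qed.
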